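(* For all integers $n \ge 8$ and $d \ge 6$ with $d \le n-1$, \[ \binom{d-1}{2} + (d-1)\binom{n-d}{2}\,\mathcal{F}_{P_{n-d}} \le \binom{n}{2}\,\mathcal{F}_{P_n}. \]
   Context: $\mathcal{F}_{P_m}$ (for $m\ge1$) is the number of minimal forts of the path on $m$ vertices; equivalently $\mathcal{F}_{P_m}=a_m$ where $a_1=a_2=a_3=1$ and $a_m = a_{m-2}+a_{m-3}$ for $m \ge 4$. (A fort is a nonempty vertex set such that every vertex outside it has zero or at least two neighbors in it; minimal means no proper subset is a fort.) Binomial coefficients $\binom{j}{2}$ with $j<2$ are $0$. *)

(* Defs.v *)
From mathcomp Require Import all_boot.

(* Number of minimal forts of the path P_m (m >= 1), given by the recurrence
   a_1 = a_2 = a_3 = 1, a_m = a_{m-2} + a_{m-3} for m >= 4.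
   The value at m = 0 is an arbitrary convention (never used). *)
Fixpoint fortP (m : nat) : nat :=
  match m with
  | 0 => 0
  | 1 | 2 | 3 => 1
  | (k.+1 as m1).+1 => fortP k + (match k with 0 => 0 | k'.+1 => fortP k' end)
  end.

(* Main.v *)
Require Import Defs.
From mathcomp Require Import all_boot.
From mathcomp Require Import zify.

Lemma fortS k : fortP k.+4 = fortP k.+2 + fortP k.+1.
Proof. by []. Qed.

Lemma fort_pos k : 1 <= k -> 1 <= fortP k.
Proof.
elim: k {-2}k (leqnn k) => [|N IH] k Hk H1.
  by move: Hk H1; case: k.
case: k Hk H1 => [|[|[|[|j]]]] // Hk _.
rewrite fortS; have := IH j.+2; lia.
Qed.

Lemma shift (d K m0 : nat) : 1 <= m0 ->
  (forall i, i < 3 -> K * fortP (m0 + i) <= fortP (m0 + i + d)) ->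
  forall m, m0 <= m -> K * fortP m <= fortP (m + d).
Proof.
move=> H0 Hb m.
elim: m {-2}m (leqnn m) => [|N IH] m Hm Hm0.
  have -> : m = m0 + 0 by lia.
  by apply: Hb.
case: (ltnP m (m0 + 3)) => Hlt.
  have -> : m = m0 + (m - m0) by lia.
  apply: Hb; lia.
case: m Hm Hm0 Hlt => [|[|[|[|j]]]] Hm Hm0 Hlt; try lia.
have -> : j.+4 + d = (j + d).+4 by lia.
rewrite !fortS mulnDr.
have E2 : (j + d).+2 = j.+2 + d by lia.
have E1 : (j + d).+1 = j.+1 + d by lia.
rewrite E2 E1; apply: leq_add; apply: IH; lia.
Qed.

Lemma growth d m : 7 <= d -> 2 <= m -> (d - 1) * fortP m <= fortP (m + d).
Proof.
elim: d {-2}d (leqnn d) => [|N IH] d Hd H7 Hm; first lia.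
case: (ltnP d 10) => Hd10.
  have : (d == 7) || (d == 8) || (d == 9) by lia.
  by case/orP => [/orP [] | ] /eqP -> ; apply: (shift _ _ 2) => // -[|[|[|i]]].
case: d Hd H7 Hd10 => [|[|[|e]]] Hd H7 Hd10; try lia.
have -> : m + e.+3 = (m + e - 1).+4 by lia.
rewrite fortS.
have -> : (m + e - 1).+2 = m + e.+1 by lia.
have -> : (m + e - 1).+1 = m + e by lia.
have h1 := IH e.+1 ltac:(lia) ltac:(lia) Hm.
have h2 := IH e ltac:(lia) ltac:(lia) Hm.
have : (e.+3 - 1) * fortP m <= (e.+1 - 1) * fortP m + (e - 1) * fortP m.
  rewrite -mulnDl; apply: leq_mul => //; lia.
lia.
Qed.

Lemma growth6 m : 2 <= m -> m != 4 -> 5 * fortP m <= fortP (m + 6).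
Proof.
move=> H2 H4.
case: (ltnP m 5) => H5.
  have : (m == 2) || (m == 3) by lia.
  by case/orP => /eqP ->.
by apply: (shift _ _ 5) => // -[|[|[|i]]].
Qed.

Lemma bin2_add m d : 'C(m, 2) + 'C(d, 2) <= 'C(m + d, 2).
Proof.
elim: d => [|d IH]; first by rewrite addn0 bin0n addn0.
rewrite addnS !binS !bin1; lia.
Qed.

Theorem mainTheorem19 (n d : nat) :
  8 <= n -> 6 <= d -> d <= n - 1 ->
  'C(d - 1, 2) + (d - 1) * 'C(n - d, 2) * fortP (n - d) <= 'C(n, 2) * fortP n.
Proof.
move=> Hn Hd Hdn.
set m := n - d.
have Hnm : n = m + d by rewrite /m; lia.
have Hm1 : 1 <= m by rewrite /m; lia.
have Fn := fort_pos n ltac:(lia).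
have Hb : 'C(d - 1, 2) + 'C(m, 2) <= 'C(n, 2).
  apply: leq_trans (_ : 'C(d, 2) + 'C(m, 2) <= _).
    by rewrite leq_add2r; apply: leq_bin2l; lia.
  by rewrite addnC Hnm; apply: bin2_add.
case: (m =P 1) => [E1|N1].
  rewrite E1 (_ : 'C(1, 2) = 0) // muln0 mul0n addn0.
  apply: leq_trans (leq_trans (leq_addr 'C(m, 2) _) Hb) _.
  by rewrite leq_pmulr.
case: (ltnP d 7) => Hd7.
  have Ed : d = 6 by lia.
  case: (m =P 4) => [E4|N4].
    by rewrite Hnm E4 Ed.
  have G := growth6 m ltac:(lia) ltac:(apply/eqP; exact N4).
  have G' : (d - 1) * fortP m <= fortP n by rewrite Hnm Ed.
  have K : (d - 1) * 'C(m, 2) * fortP m <= 'C(m, 2) * fortP n.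
    by rewrite (mulnC (d - 1)) -mulnA leq_mul2l G' orbT.
  apply: leq_trans (leq_add (leqnn _) K) _.
  apply: leq_trans (_ : ('C(d - 1, 2) + 'C(m, 2)) * fortP n <= _).
    by rewrite mulnDl leq_add2r leq_pmulr.
  by apply: leq_mul.
have G := growth d m Hd7 ltac:(lia).
have G' : (d - 1) * fortP m <= fortP n by rewrite Hnm.
have K : (d - 1) * 'C(m, 2) * fortP m <= 'C(m, 2) * fortP n.
  by rewrite (mulnC (d - 1)) -mulnA leq_mul2l G' orbT.
apply: leq_trans (leq_add (leqnn _) K) _.
apply: leq_trans (_ : ('C(d - 1, 2) + 'C(m, 2)) * fortP n <= _).
  by rewrite mulnDl leq_add2r leq_pmulr.
by apply: leq_mul.
Qed.
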